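(* Let $A\subseteq\mathbb{N}$ be infinite and coinfinite and let $Q=\{X\subseteq\mathbb{N}: X\triangle A \text{ is finite}\}$, a quantifier of type $\langle 1\rangle$. Then the set $\{X\subseteq\mathbb{N}: X\setminus A\text{... }\}$, precisely the set $\{X\subseteq\mathbb{N}: A\setminus X\text{ is finite}\}$, viewed as a subset of the logic space $X_\tau=2^{\mathbb{N}}$ for the signature $\tau$ consisting of one unary relation, is $\mathrm{Aut}(Q)$-invariant but not definable in $\mathscr{L}_{\omega_1\omega}(Q)$.
   Context: A quantifier of type $\langle k\rangle$ on $\mathbb{N}$ is a family $Q$ of subsets of $\mathbb{N}^k$. The logic $\mathscr{L}_{\omega_1\omega}(Q)$ extends $\mathscr{L}_{\omega_1\omega}$ (countable conjunctions/disjunctions, finite quantifier strings) by formulas $Qx\,\varphi(x,y)$, interpreted in a structure $M$ with universe $\mathbb{N}$ by $M\models Qx\,\varphi(x,b)$ iff $\{a:M\models\varphi(a,b)\}\in Q$. A permutation $f$ of $\mathbb{N}$ fixes $Q$ if $B\in Q\iff f(B)\in Q$ for all $B$, where $f(B)=\{f(b):b\in B\}$; $\mathrm{Aut}(Q)$ is the group of such permutations. A set $S\subseteq 2^\mathbb{N}$ (identified with structures $\langle\mathbb{N},X\rangle$ with one unary predicate $X$) is $\mathrm{Aut}(Q)$-invariant if $g(S)=S$ for all $g\in\mathrm{Aut}(Q)$, and definable in $\mathscr{L}_{\omega_1\omega}(Q)$ if there is a sentence $\varphi$ in the signature with one unary predicate such that $X\in S\iff\langle\mathbb{N},X\rangle\models\varphi$.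 *)

(* Defs.v *)
From Stdlib Require Import Arith.

Definition nset := nat -> Prop.

Definition finite_set (B : nset) : Prop := exists n, forall x, B x -> x < n.

Definition symdiff (X A : nset) : nset := fun n => (X n /\ ~ A n) \/ (A n /\ ~ X n).
Definition setminus (A X : nset) : nset := fun n => A n /\ ~ X n.
Definition compl (A : nset) : nset := fun n => ~ A n.

(* Quantifiers of type <1> on N: families of subsets of N. *)
Definition quant1 := nset -> Prop.

Definition is_perm (f : nat -> nat) : Prop :=
  (forall x y, f x = f y -> x = y) /\ (forall y, exists x, f x = y).

Definition img (f : nat -> nat) (B : nset) : nset := fun y => exists b, B b /\ f b = y.

Definition seteq (B C : nset) : Prop := forall n, B n <-> C n.

Definition fixes (f : nat -> nat) (Q : quant1) : Prop := forall B, Q B <-> Q (img f B).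

Definition in_Aut (Q : quant1) (f : nat -> nat) : Prop := is_perm f /\ fixes f Q.

Definition Aut_invariant (Q : quant1) (S : nset -> Prop) : Prop :=
  forall g, in_Aut Q g ->
    (forall Y, (exists X, S X /\ seteq (img g X) Y) <-> S Y).

(* Formulas of L_{omega_1 omega}(Q) in the signature with one unary predicate P,
   variables are natural numbers. *)
Inductive form : Type :=
| FP   : nat -> form
| FEq  : nat -> nat -> form
| FNeg : form -> form
| FAnd : (nat -> form) -> form
| FOr  : (nat -> form) -> form
| FEx  : nat -> form -> form
| FAll : nat -> form -> form
| FQ   : nat -> form -> form.

Definition upd (e : nat -> nat) (v a : nat) : nat -> nat :=
  fun w => if Nat.eqb w v then a else e w.

Fixpoint sat (Q : quant1) (X : nset) (e : nat -> nat) (phi : form) : Prop :=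
  match phi with
  | FP v => X (e v)
  | FEq u v => e u = e v
  | FNeg p => ~ sat Q X e p
  | FAnd fs => forall n, sat Q X e (fs n)
  | FOr fs => exists n, sat Q X e (fs n)
  | FEx v p => exists a, sat Q X (upd e v a) p
  | FAll v p => forall a, sat Q X (upd e v a) p
  | FQ v p => Q (fun a => sat Q X (upd e v a) p)
  end.

Fixpoint free (w : nat) (phi : form) : Prop :=
  match phi with
  | FP v => v = w
  | FEq u v => u = w \/ v = w
  | FNeg p => free w p
  | FAnd fs => exists n, free w (fs n)
  | FOr fs => exists n, free w (fs n)
  | FEx v p => v <> w /\ free w p
  | FAll v p => v <> w /\ free w p
  | FQ v p => v <> w /\ free w p
  end.

Definition sentence (phi : form) : Prop := forall w, ~ free w phi.

(* S is definable in L_{omega_1 omega}(Q) by a sentence (the assignment is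
   irrelevant for sentences; we use the constant 0 one). *)
Definition definable (Q : quant1) (S : nset -> Prop) : Prop :=
  exists phi, sentence phi /\ forall X, S X <-> sat Q X (fun _ => 0) phi.

(* Main.v *)
Require Import Defs.
From Stdlib Require Import Arith Lia List Classical IndefiniteDescription.
Import ListNotations.

Definition unb (B: nset) := forall n, exists x, n <= x /\ B x.

Lemma unb_not_fin B : unb B -> ~ finite_set B.
Proof. intros H [n Hn]. destruct (H n) as [x [Hx Bx]]. specialize (Hn x Bx). lia. Qed.

Lemma not_fin_unb B : ~ finite_set B -> unb B.
Proof.
  intros H n. apply NNPP; intro Hc. apply H. exists n. intros x Bx.
  destruct (Nat.lt_ge_cases x n); auto. exfalso; apply Hc; eauto.
Qed.

Lemma unb_mono (B B' : nset) : unb B -> (forall x, B x -> B' x) -> unb B'.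
Proof. intros H H' n. destruct (H n) as [x [? ?]]. eauto. Qed.

Lemma bound_list (e: nat->nat) (F: list nat) : exists n, forall w, In w F -> e w < n.
Proof.
  induction F as [|a F [n Hn]]. exists 0; simpl; tauto.
  exists (Nat.max n (S (e a))). intros w [->|Hw]; [lia| specialize (Hn w Hw); lia].
Qed.

Definition rel (X1 X2: nset) (F : list nat) (e1 e2 : nat -> nat) :=
  (forall u, In u F -> (X1 (e1 u) <-> X2 (e2 u))) /\
  (forall u w, In u F -> In w F -> (e1 u = e1 w <-> e2 u = e2 w)).

Lemma rel_sym X1 X2 F e1 e2 : rel X1 X2 F e1 e2 -> rel X2 X1 F e2 e1.
Proof. intros [H1 H2]; split; intros; [symmetry; apply H1 | symmetry; apply H2]; auto. Qed.

Lemma upd_eq e v a : upd e v a v = a.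
Proof. unfold upd; rewrite Nat.eqb_refl; auto. Qed.
Lemma upd_neq e v a w : w <> v -> upd e v a w = e w.
Proof. intro H; unfold upd; apply Nat.eqb_neq in H; rewrite H; auto. Qed.

Lemma in_cons_neq (u v : nat) F : In u (v::F) -> u <> v -> In u F.
Proof. intros [<-|H] H'; [congruence|auto]. Qed.

Lemma rel_ext X1 X2 F e1 e2 v a : unb X2 -> unb (compl X2) -> rel X1 X2 F e1 e2 ->
  exists b, rel X1 X2 (v::F) (upd e1 v a) (upd e2 v b).
Proof.
  intros H2 H2' [Hc He].
  destruct (classic (exists w, In w F /\ w <> v /\ e1 w = a)) as [[w [Hw [Hwv Ha]]]|Hno].
  - exists (e2 w). split.
    + intros u Hu. destruct (Nat.eq_dec u v) as [->|Huv].
      * rewrite !upd_eq. subst a. apply Hc; auto.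
      * rewrite !upd_neq by auto. apply Hc. eapply in_cons_neq; eauto.
    + intros u u' Hu Hu'.
      destruct (Nat.eq_dec u v) as [->|Huv]; destruct (Nat.eq_dec u' v) as [->|Huv'].
      * rewrite !upd_eq; tauto.
      * rewrite !upd_eq, !upd_neq by auto. subst a. apply He; auto. eapply in_cons_neq; eauto.
      * rewrite !upd_eq, !upd_neq by auto. subst a. apply He; auto. eapply in_cons_neq; eauto.
      * rewrite !upd_neq by auto. apply He; eapply in_cons_neq; eauto.
  - destruct (bound_list e2 F) as [n Hn].
    assert (exists b, n <= b /\ (X1 a <-> X2 b)) as [b [Hb Hab]].
    { destruct (classic (X1 a)).
      - destruct (H2 n) as [b [? ?]]. exists b; split; tauto.
      - destruct (H2' n) as [b [? ?]]; exists b; unfold compl in *; split; tauto. }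
    exists b. split.
    + intros u Hu. destruct (Nat.eq_dec u v) as [->|Huv].
      * rewrite !upd_eq. auto.
      * rewrite !upd_neq by auto. apply Hc. eapply in_cons_neq; eauto.
    + intros u u' Hu Hu'.
      destruct (Nat.eq_dec u v) as [->|Huv]; destruct (Nat.eq_dec u' v) as [->|Huv'].
      * rewrite !upd_eq; tauto.
      * rewrite !upd_eq, !upd_neq by auto. assert (In u' F) by (eapply in_cons_neq; eauto).
        specialize (Hn u' H). split; intro Hx.
        -- exfalso; apply Hno; eauto.
        -- lia.
      * rewrite !upd_eq, !upd_neq by auto. assert (In u F) by (eapply in_cons_neq; eauto).
        specialize (Hn u H). split; intro Hx.
        -- exfalso; apply Hno; eauto.
        -- lia.
      * rewrite !upd_neq by auto. apply He; eapply in_cons_neq; eauto.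
Qed.

Definition Q0 : quant1 := fun _ => False.

Lemma equiv X1 X2 : unb X1 -> unb (compl X1) -> unb X2 -> unb (compl X2) ->
  forall phi F e1 e2, (forall w, free w phi -> In w F) -> rel X1 X2 F e1 e2 ->
  (sat Q0 X1 e1 phi <-> sat Q0 X2 e2 phi).
Proof.
  intros h1 h1' h2 h2' phi;
  induction phi as [v|u v|p IH|fs IH|fs IH|v p IH|v p IH|v p IH];
  intros F e1 e2 HF HR; simpl.
  - apply (proj1 HR). apply HF; simpl; auto.
  - apply (proj2 HR); apply HF; simpl; auto.
  - rewrite (IH F e1 e2 HF HR); tauto.
  - assert (Hn: forall n, sat Q0 X1 e1 (fs n) <-> sat Q0 X2 e2 (fs n))
      by (intro n; apply (IH n F); [intros w Hw; apply HF; simpl; eauto | exact HR]).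
    split; intros H n; apply Hn; auto.
  - assert (Hn: forall n, sat Q0 X1 e1 (fs n) <-> sat Q0 X2 e2 (fs n))
      by (intro n; apply (IH n F); [intros w Hw; apply HF; simpl; eauto | exact HR]).
    split; intros [n H]; exists n; apply Hn; auto.
  - assert (HF': forall w, free w p -> In w (v::F)).
    { intros w Hw; destruct (Nat.eq_dec v w); [left; auto| right; apply HF; simpl; auto]. }
    split; intros [a Ha].
    + destruct (rel_ext X1 X2 F e1 e2 v a h2 h2' HR) as [b Hb]. exists b.
      apply (IH _ _ _ HF' Hb); auto.
    + destruct (rel_ext X2 X1 F e2 e1 v a h1 h1' (rel_sym _ _ _ _ _ HR)) as [b Hb]. exists b.
      apply (IH _ _ _ HF' (rel_sym _ _ _ _ _ Hb)); auto.
  - assert (HF': forall w, free w p -> In w (v::F)).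
    { intros w Hw; destruct (Nat.eq_dec v w); [left; auto| right; apply HF; simpl; auto]. }
    split; intros H a.
    + destruct (rel_ext X2 X1 F e2 e1 v a h1 h1' (rel_sym _ _ _ _ _ HR)) as [b Hb].
      apply (IH _ _ _ HF' (rel_sym _ _ _ _ _ Hb)); auto.
    + destruct (rel_ext X1 X2 F e1 e2 v a h2 h2' HR) as [b Hb].
      apply (IH _ _ _ HF' Hb); auto.
  - unfold Q0; tauto.
Qed.

Lemma rel_fresh X F e v a b n : (forall w, In w F -> e w < n) -> n <= a -> n <= b ->
  (X a <-> X b) -> rel X X (v::F) (upd e v a) (upd e v b).
Proof.
  intros Hn Ha Hb Hab. split.
  - intros u Hu; destruct (Nat.eq_dec u v) as [->|]; [rewrite !upd_eq; auto| rewrite !upd_neq; tauto].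
  - intros u w Hu Hw.
    destruct (Nat.eq_dec u v) as [->|Huv]; destruct (Nat.eq_dec w v) as [->|Hwv].
    + rewrite !upd_eq; tauto.
    + rewrite !upd_eq, !upd_neq by auto. specialize (Hn w (in_cons_neq _ _ _ Hw Hwv)).
      split; intro; lia.
    + rewrite !upd_eq, !upd_neq by auto. specialize (Hn u (in_cons_neq _ _ _ Hu Huv)).
      split; intro; lia.
    + rewrite !upd_neq by auto; tauto.
Qed.

Lemma QQ0 (A X : nset) : unb (fun x => X x /\ A x) -> unb (fun x => X x /\ ~ A x) ->
  unb (compl X) ->
  forall phi F e, (forall w, free w phi -> In w F) ->
  (sat (fun Y => finite_set (symdiff Y A)) X e phi <-> sat Q0 X e phi).
Proof.
  intros hXA hXnA hcX.
  assert (hX : unb X) by (apply (unb_mono _ _ hXA); tauto).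
  intro phi;
  induction phi as [v|u v|p IH|fs IH|fs IH|v p IH|v p IH|v p IH];
  intros F e HF; simpl.
  - tauto.
  - tauto.
  - rewrite (IH F e HF); tauto.
  - assert (Hn: forall n, sat (fun Y => finite_set (symdiff Y A)) X e (fs n) <-> sat Q0 X e (fs n))
      by (intro n; apply (IH n F); intros w Hw; apply HF; simpl; eauto).
    split; intros H n; apply Hn; auto.
  - assert (Hn: forall n, sat (fun Y => finite_set (symdiff Y A)) X e (fs n) <-> sat Q0 X e (fs n))
      by (intro n; apply (IH n F); intros w Hw; apply HF; simpl; eauto).
    split; intros [n H]; exists n; apply Hn; auto.
  - assert (HF': forall w, free w p -> In w (v::F)).
    { intros w Hw; destruct (Nat.eq_dec v w); [left; auto| right; apply HF; simpl; auto]. }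
    split; intros [a Ha]; exists a; apply (IH (v::F) (upd e v a) HF'); auto.
  - assert (HF': forall w, free w p -> In w (v::F)).
    { intros w Hw; destruct (Nat.eq_dec v w); [left; auto| right; apply HF; simpl; auto]. }
    split; intros H a; apply (IH (v::F) (upd e v a) HF'); auto.
  - assert (HF': forall w, free w p -> In w (v::F)).
    { intros w Hw; destruct (Nat.eq_dec v w); [left; auto| right; apply HF; simpl; auto]. }
    unfold Q0. split; [|tauto]. intros [m Hm]. unfold symdiff in Hm.
    destruct (bound_list e F) as [n Hn].
    assert (Heq: forall a b, n <= a -> n <= b -> X a -> X b ->
      (sat (fun Y => finite_set (symdiff Y A)) X (upd e v a) p <->
       sat (fun Y => finite_set (symdiff Y A)) X (upd e v b) p)).
    { intros a b Ha Hb Xa Xb. rewrite !(IH (v::F) _ HF').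
      apply equiv with (F := v::F); auto. apply rel_fresh with n; tauto. }
    destruct (hXA n) as [x0 [Hx0 [Xx0 Ax0]]].
    destruct (classic (sat (fun Y => finite_set (symdiff Y A)) X (upd e v x0) p)) as [Ht|Hf].
    + destruct (hXnA (Nat.max n m)) as [c [Hc [Xc nAc]]].
      assert (c < m). { apply Hm. left. split; [apply (Heq x0 c); auto; lia| auto]. } lia.
    + destruct (hXA (Nat.max n m)) as [d [Hd [Xd Ad]]].
      assert (d < m). { apply Hm. right. split; auto. intro Hd'. apply Hf.
        apply (Heq x0 d); auto; lia. } lia.
Qed.

Fixpoint seqf (g : nat -> nat) k := match k with 0 => g 0 | S k => g (S (seqf g k)) end.

Lemma split_unb B : unb B -> exists C, (forall x, C x -> B x) /\ unb C /\ unb (fun x => B x /\ ~ C x).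
Proof.
  intros H.
  assert (Hg0: exists g : nat -> nat, forall n, n <= g n /\ B (g n)).
  { exists (fun n => proj1_sig (constructive_indefinite_description _ (H n))).
    intro n. destruct (constructive_indefinite_description _ (H n)) as [x Hx]; simpl; exact Hx. }
  destruct Hg0 as [g Hg].
  assert (Hmono: forall k, seqf g k < seqf g (S k)).
  { intro k; simpl. destruct (Hg (S (seqf g k))); lia. }
  assert (Hsm: forall j i, i < j -> seqf g i < seqf g j).
  { induction j as [|j IHj]; intros i Hij; [lia|].
    destruct (Nat.eq_dec i j) as [->|]. apply Hmono.
    specialize (IHj i ltac:(lia)); specialize (Hmono j); lia. }
  assert (Hinj: forall i j, seqf g i = seqf g j -> i = j).
  { intros i j Hij. destruct (Nat.lt_total i j) as [Hl|[Hl|Hl]]; auto.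
    - specialize (Hsm _ _ Hl); lia.
    - specialize (Hsm _ _ Hl); lia. }
  assert (Hge: forall k, k <= seqf g k).
  { induction k; simpl. apply Hg. destruct (Hg (S (seqf g k))); lia. }
  assert (HB: forall k, B (seqf g k)) by (destruct k; simpl; apply Hg).
  exists (fun x => exists k, x = seqf g (2*k)).
  split. { intros x [k ->]. apply HB. }
  split.
  - intro n. exists (seqf g (2*n)). split; [pose proof (Hge (2*n)); lia | eauto].
  - intro n. exists (seqf g (2*n+1)). split; [pose proof (Hge (2*n+1)); lia|].
    split; [apply HB|]. intros [k Hk]. apply Hinj in Hk. lia.
Qed.

Lemma bound_fun (g: nat->nat) n : exists M, forall x, x < n -> g x < M.
Proof.
  induction n. exists 0; lia. destruct IHn as [M HM]. exists (Nat.max M (S (g n))).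
  intros x Hx. destruct (Nat.eq_dec x n) as [->|]; [lia|]. specialize (HM x ltac:(lia)); lia.
Qed.

Lemma preim_bound (g : nat -> nat) : (forall x y, g x = g y -> x = y) ->
  forall n, exists K, forall x, g x < n -> x < K.
Proof.
  intros Hinj. induction n. exists 0; lia. destruct IHn as [K HK].
  destruct (classic (exists x0, g x0 = n)) as [[x0 Hx0]|Hno].
  - exists (Nat.max K (S x0)). intros x Hx. destruct (Nat.eq_dec (g x) n).
    + assert (x = x0) by (apply Hinj; congruence). lia.
    + specialize (HK x ltac:(lia)); lia.
  - exists K. intros x Hx. destruct (Nat.eq_dec (g x) n).
    + exfalso; eauto.
    + apply HK; lia.
Qed.

Theorem mainTheorem5 (A : nset) :
  ~ finite_set A -> ~ finite_set (compl A) ->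
  Aut_invariant (fun X => finite_set (symdiff X A)) (fun X => finite_set (setminus A X)) /\
  ~ definable (fun X => finite_set (symdiff X A)) (fun X => finite_set (setminus A X)).
Proof.
  intros HA HcA. split.
  - intros g [[Hinj Hsurj] Hfix] Y.
    assert (HQA: finite_set (symdiff (img g A) A)).
    { pose proof (proj1 (Hfix A)) as H; simpl in H; apply H.
      exists 0; intros x Hx; unfold symdiff in Hx; tauto. }
    destruct HQA as [m1 Hm1].
    assert (HQP: finite_set (symdiff (fun x => A (g x)) A)).
    { pose proof (proj2 (Hfix (fun x => A (g x)))) as H; simpl in H; apply H.
      exists 0. intros y Hy. unfold symdiff, img in Hy.
      destruct Hy as [[[b [Hb1 Hb2]] Hn]|[Hy Hn]].
      - subst; contradiction.
      - exfalso. destruct (Hsurj y) as [x Hx]. apply Hn; exists x; subst; auto. }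
    destruct HQP as [m2 Hm2].
    unfold symdiff in Hm1, Hm2.
    split.
    + intros [X [[n Hn] HXY]]. destruct (bound_fun g n) as [M HM].
      exists (Nat.max m1 M). intros y [Ay nY]. destruct (Hsurj y) as [x <-].
      assert (nX: ~ X x) by (intro Xx; apply nY; apply HXY; exists x; auto).
      destruct (classic (A x)) as [Ax|nAx].
      * assert (x < n) by (apply Hn; split; auto). specialize (HM x H). lia.
      * assert (g x < m1). { apply Hm1. right. split; auto. intros [b [Ab Hb]].
          apply Hinj in Hb. subst; contradiction. } lia.
    + intros [n Hn]. exists (fun x => Y (g x)). split.
      * destruct (preim_bound g Hinj n) as [K HK]. exists (Nat.max m2 K).
        intros x [Ax nYx]. destruct (classic (A (g x))) as [H|H].
        -- assert (g x < n) by (apply Hn; split; auto). specialize (HK x H0). lia.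
        -- assert (x < m2) by (apply Hm2; right; split; auto). lia.
      * intro y. split.
        -- intros [b [Yb <-]]; auto.
        -- intro Yy. destruct (Hsurj y) as [x <-]. exists x; auto.
  - intros [phi [Hs Hdef]].
    apply not_fin_unb in HA. apply not_fin_unb in HcA.
    destruct (split_unb _ HcA) as [C [HC1 [HC2 HC3]]].
    destruct (split_unb _ HA) as [D [HD1 [HD2 HD3]]].
    unfold compl in *.
    assert (Hfree: forall w, free w phi -> In w []) by (intros w Hw; exfalso; exact (Hs w Hw)).
    assert (S1: finite_set (setminus A (fun x => A x \/ C x))).
    { exists 0. intros x Hx; unfold setminus in Hx; tauto. }
    assert (nS2: ~ finite_set (setminus A (fun x => D x \/ C x))).
    { apply unb_not_fin. apply (unb_mono _ _ HD3). intros x [Ax nDx]. split; auto.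
      intros [Dx|Cx]; auto. apply (HC1 x Cx); auto. }
    assert (u1: unb (fun x => (fun x => A x \/ C x) x /\ A x))
      by (apply (unb_mono _ _ HA); simpl; tauto).
    assert (u2: unb (fun x => (fun x => A x \/ C x) x /\ ~ A x))
      by (apply (unb_mono _ _ HC2); intros x Cx; simpl; split; auto).
    assert (u3: unb (compl (fun x => A x \/ C x))).
    { apply (unb_mono _ _ HC3). intros x [nAx nCx]. unfold compl; tauto. }
    assert (v1: unb (fun x => (fun x => D x \/ C x) x /\ A x))
      by (apply (unb_mono _ _ HD2); intros x Dx; simpl; split; auto).
    assert (v2: unb (fun x => (fun x => D x \/ C x) x /\ ~ A x))
      by (apply (unb_mono _ _ HC2); intros x Cx; simpl; split; auto).
    assert (v3: unb (compl (fun x => D x \/ C x))).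
    { apply (unb_mono _ _ HD3). intros x [Ax nDx]. unfold compl.
      intros [Dx|Cx]; auto. apply (HC1 x Cx); auto. }
    apply nS2. apply Hdef.
    apply (proj2 (QQ0 A _ v1 v2 v3 phi [] (fun _ => 0) Hfree)).
    apply (proj1 (equiv (fun x => A x \/ C x) (fun x => D x \/ C x)
       ltac:(apply (unb_mono _ _ u1); tauto) u3
       ltac:(apply (unb_mono _ _ v1); tauto) v3 phi [] (fun _ => 0) (fun _ => 0) Hfree
       ltac:(split; intros; simpl in *; contradiction))).
    apply (proj1 (QQ0 A _ u1 u2 u3 phi [] (fun _ => 0) Hfree)).
    apply Hdef. exact S1.
Qed.
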